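(* Let $\Gamma$ be a single-player extensive-form game and let $\mathscr C$ be the class of all single-player games sharing the same game tree and infoset partition as $\Gamma$ (with arbitrary nonnegative utilities). Then $$\mathrm{VoR}^{\mathrm{opt}}(\mathscr C)\le \max_{z\in\mathcal Z,\,h\in\mathcal H_c}\frac{\beta(h)}{\alpha(z)}.$$
   Context: An extensive-form game consists of a finite rooted tree with node set $\mathcal H$, leaves $\mathcal Z$, actions $A_h$ at nonterminal $h$; nonterminal nodes belong either to the single player (Player 1) or to chance; $\mathcal H_c$ is the set of chance nodes, each with a fixed distribution $\mathbb P_c(\cdot\mid h)$ on $A_h$. Player 1 has utility $u_1:\mathcal Z\to\mathbb R_{\ge0}$ and a partition $\mathcal I_1$ of its nodes into infosets, with a common action set $A_I$ for all nodes of an infoset $I$. The game tree is $\mathcal H$ with its actions and chance distributions. For a node $h$ at depth $d$, let $(h_0,\dots,h_{d-1})$ be the root-to-$h$ path (excluding $h$) and $\mathrm{obs}(h)=(i_k,I_k,a_k)_{k=0}^{d-1}$ with $i_k$ the player (1 or chance) at $h_k$, $I_k$ the infoset of $h_k$ (for player nodes), $a_k$ the action taken at $h_k$. A behavioral strategy $\pi$ assigns $\pi(\cdot\mid I)\in\Delta(A_I)$ to each $I$; $\mathbb P(z\mid\pi)$ is the reach probability of $z$; $U_1(\pi)=\sum_z\mathbb P(z\mid\pi)u_1(z)$; $u_1(\mathrm{opt}(\Gamma))=\max_\pi U_1(\pi)$. $\mathrm{pr}_1(\Gamma)$ has the same tree and utilities, with each $I\in\mathcal I_1$ partitioned by $h\sim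 h'\iff\mathrm{obs}_1(h)=\mathrm{obs}_1(h')$, where $\mathrm{obs}_1$ is the subsequence of $\mathrm{obs}$ with $i_k=1$. $\mathrm{VoR}^{\mathrm{opt}}(\Gamma)=u_1(\mathrm{opt}(\mathrm{pr}_1(\Gamma)))/u_1(\mathrm{opt}(\Gamma))$, and $\mathrm{VoR}^{\mathrm{opt}}(\mathscr C)=\sup_{\Gamma\in\mathscr C}\mathrm{VoR}^{\mathrm{opt}}(\Gamma)$. Absentmindedness coefficient: for $z\in\mathcal Z$, $I\in\mathcal I_1$ and $a\in A_I$, let $n_z(I)=|\{k:I_k=I\}|$, $n_z(a)=|\{k:I_k=I,a_k=a\}|$, $p_z(a)=n_z(a)/n_z(I)$, and $\alpha(z)=\prod_{I\in\mathcal I_1:n_z(I)>1}\ \prod_{a\in A_I:n_z(a)>0}p_z(a)^{n_z(a)}\in(0,1]$. Branching factor: for a chance node $h$ and $a\in A_h$, let $H_{ha}$ be the set of chance nodes in the subtree rooted at the child of $h$ reached by $a$; set $b_h(a)=1$ if $H_{ha}=\emptyset$ and $b_h(a)=\max_{h'\in H_{ha}}\beta(h')$ otherwise, and $\beta(h)=\sum_{a\in A_h}b_h(a)$ (defined recursively bottom-up). By convention, $\max_{h\in\mathcal H_c}\beta(h)=1$ if $\mathcal H_c=\emptyset$. *)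

(* Defs.v *)
From HB Require Import structures.
From mathcomp Require Import all_boot all_order all_algebra.
From mathcomp Require Import classical_sets reals.
Set Implicit Arguments. Unset Strict Implicit. Unset Printing Implicit Defensive.
Import Order.TTheory GRing.Theory Num.Theory.
Local Open Scope ring_scope.
Local Open Scope classical_set_scope.

(* A single-player extensive-form game tree.  [L] is the type of infoset
   labels of Player 1.  The actions at a node are the positions 0,1,... of
   its list of children.
   - [Leaf]          : a terminal node z;
   - [PNode J cs]    : a Player-1 node in infoset I; action i leads to cs`_i;
   - [CNode pcs]     : a chance node; action i has probability pcs`_i.1 and
                       leads to pcs`_i.2. *)
Inductive tree (R : Type) (L : Type) : Type :=
| Leaf : tree R L
| PNode : L -> seq (tree R L) -> tree R L
| CNode : seq (R * tree R L) -> tree R L.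
Arguments Leaf {R L}.

Section Game.
Variable R : realType.

Fixpoint wf_game (L : Type) (nA : L -> nat) (t : tree R L) : Prop :=
  match t with
  | Leaf => True
  | PNode J cs =>
      (0 < nA J)%N /\ size cs = nA J /\
      (fix go (cs : seq (tree R L)) : Prop :=
         match cs with [::] => True | c :: cs' => wf_game nA c /\ go cs' end) cs
  | CNode pcs =>
      pcs <> [::] /\ \sum_(pc <- pcs) pc.1 = 1 /\
      (fix go (pcs : seq (R * tree R L)) : Prop :=
         match pcs with
         | [::] => True
         | pc :: pcs' => 0 <= pc.1 /\ wf_game nA pc.2 /\ go pcs'
         end) pcs
  end.

Fixpoint infosets (L : Type) (t : tree R L) : seq L :=
  match t with
  | Leaf => [::]
  | PNode J cs => J :: flatten (map (@infosets L) cs)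
  | CNode pcs => flatten (map (fun pc => infosets pc.2) pcs)
  end.

Definition is_strat (L : eqType) (nA : L -> nat) (t : tree R L)
    (pi : L -> nat -> R) : Prop :=
  forall I, I \in infosets t ->
    (forall a, 0 <= pi I a) /\ \sum_(a < nA I) pi I a = 1.

(* Expected utility U_1(pi) = sum_z P(z | pi) u(z); leaves are identified by
   their root-to-leaf action path (a [seq nat]), so a utility is a function
   [u : seq nat -> R] evaluated at leaf paths. *)
Fixpoint EU (L : Type) (pi : L -> nat -> R) (u : seq nat -> R) (t : tree R L)
    : R :=
  match t with
  | Leaf => u [::]
  | PNode J cs =>
      (fix go (i : nat) (cs : seq (tree R L)) : R :=
         match cs with
         | [::] => 0
         | c :: cs' => pi J i * EU pi (fun s => u (i :: s)) c + go i.+1 cs'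
         end) 0%N cs
  | CNode pcs =>
      (fix go (i : nat) (pcs : seq (R * tree R L)) : R :=
         match pcs with
         | [::] => 0
         | pc :: pcs' => pc.1 * EU pi (fun s => u (i :: s)) pc.2 + go i.+1 pcs'
         end) 0%N pcs
  end.

Definition optval (L : eqType) (nA : L -> nat) (t : tree R L)
    (u : seq nat -> R) : R :=
  sup [set EU pi u t | pi in [set pi | is_strat nA t pi]].

(* pr_1(Gamma): same tree, each Player-1 node relabelled by the pair
   (I, obs_1(h)), where obs_1(h) is the chronological list of Player-1
   (infoset, action) pairs on the path to h. *)
Fixpoint pr1 (L : Type) (o : seq (L * nat)) (t : tree R L)
    : tree R (L * seq (L * nat)) :=
  match t with
  | Leaf => Leaf
  | PNode J cs =>
      PNode (J, o)
        ((fix go (i : nat) (cs : seq (tree R L)) :=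
            match cs with
            | [::] => [::]
            | c :: cs' => pr1 (rcons o (J, i)) c :: go i.+1 cs'
            end) 0%N cs)
  | CNode pcs => CNode (map (fun pc => (pc.1, pr1 o pc.2)) pcs)
  end.

Fixpoint leaf_obs (L : Type) (t : tree R L) : seq (seq (L * nat)) :=
  match t with
  | Leaf => [:: [::]]
  | PNode J cs =>
      (fix go (i : nat) (cs : seq (tree R L)) :=
         match cs with
         | [::] => [::]
         | c :: cs' => map (cons (J, i)) (leaf_obs c) ++ go i.+1 cs'
         end) 0%N cs
  | CNode pcs => flatten (map (fun pc => leaf_obs pc.2) pcs)
  end.

Definition alpha (L : eqType) (o : seq (L * nat)) : R :=
  let nI (I : L) := count (pred1 I) (map fst o) in
  let na (I : L) (a : nat) := count (pred1 (I, a)) o in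
  \prod_(I <- undup (map fst o) | (1 < nI I)%N)
    \prod_(a <- undup [seq x.2 | x <- o & x.1 == I])
      ((na I a)%:R / (nI I)%:R) ^+ na I a.

Definition maxlist (l : seq R) : R :=
  match l with [::] => 0 | x :: l' => foldr Num.max x l' end.

Fixpoint betas (L : Type) (t : tree R L) : seq R :=
  match t with
  | Leaf => [::]
  | PNode J cs => flatten (map (@betas L) cs)
  | CNode pcs =>
      let bs := map (fun pc => betas pc.2) pcs in
      (\sum_(l <- bs) (if l is [::] then 1 else maxlist l)) :: flatten bs
  end.

(* max_{h in H_c} beta(h), with the convention 1 if H_c is empty. *)
Definition maxbeta (L : Type) (t : tree R L) : R :=
  if betas t is [::] then 1 else maxlist (betas t).

(* max_{z in Z, h in H_c} beta(h)/alpha(z)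
   = (max_h beta(h)) * (max_z 1/alpha(z))  (all quantities are positive). *)
Definition vor_bound (L : eqType) (t : tree R L) : R :=
  maxbeta t * maxlist [seq (alpha o)^-1 | o <- leaf_obs t].

End Game.

(* Main.v *)
Require Import Defs.
From HB Require Import structures.
From mathcomp Require Import all_boot all_order all_algebra.
From mathcomp Require Import classical_sets reals.
From Stdlib Require List.
Import Order.TTheory GRing.Theory Num.Theory.
Local Open Scope ring_scope.
Set Implicit Arguments. Unset Strict Implicit. Unset Printing Implicit Defensive.

Section S.
Variable R : realType.

Definition sumi (A : Type) (f : nat -> A -> R) := fix go (i : nat) (l : seq A) : R :=
  match l with [::] => 0 | x :: l' => f i x + go i.+1 l' end.
Definition maxi (A : Type) (f : nat -> A -> R) := fix go (i : nat) (l : seq A) : R :=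
  match l with [::] => 0 | x :: l' => Num.max (f i x) (go i.+1 l') end.
Definition allP (A : Type) (P : A -> Prop) := fix go (l : seq A) : Prop :=
  match l with [::] => True | x :: l' => P x /\ go l' end.
Definition allP2 (A : Type) (P Q : A -> Prop) := fix go (l : seq A) : Prop :=
  match l with [::] => True | x :: l' => P x /\ Q x /\ go l' end.
Definition mapi (A B : Type) (f : nat -> A -> B) := fix go (i : nat) (l : seq A) : seq B :=
  match l with [::] => [::] | x :: l' => f i x :: go i.+1 l' end.
Definition cati (A B : Type) (f : nat -> A -> seq B) := fix go (i : nat) (l : seq A) : seq B :=
  match l with [::] => [::] | x :: l' => f i x ++ go i.+1 l' end.

Lemma sumi_nil A f k : @sumi A f k [::] = 0. Proof. by []. Qed.
Lemma sumi_cons A f k x l : @sumi A f k (x :: l) = f k x + sumi f k.+1 l. Proof. by []. Qed.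
Lemma maxi_nil A f k : @maxi A f k [::] = 0. Proof. by []. Qed.
Lemma maxi_cons A f k x l : @maxi A f k (x :: l) = Num.max (f k x) (maxi f k.+1 l). Proof. by []. Qed.
Lemma allP_cons A P x l : @allP A P (x :: l) = (P x /\ allP P l). Proof. by []. Qed.
Lemma allP2_cons A P Q x l : @allP2 A P Q (x :: l) = (P x /\ Q x /\ allP2 P Q l). Proof. by []. Qed.
Lemma mapi_cons A B g k x l : @mapi A B g k (x :: l) = g k x :: mapi g k.+1 l. Proof. by []. Qed.
Lemma cati_cons A B g k x l : @cati A B g k (x :: l) = g k x ++ cati g k.+1 l. Proof. by []. Qed.
Lemma cati_nil A B g k : @cati A B g k [::] = [::]. Proof. by []. Qed.
Lemma mapi_nil A B g k : @mapi A B g k [::] = [::]. Proof. by []. Qed.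
Lemma allP_nil A P : @allP A P [::]. Proof. by []. Qed.
Lemma allP2_nil A P Q : @allP2 A P Q [::]. Proof. by []. Qed.
Definition lE := (sumi_nil, sumi_cons, maxi_nil, maxi_cons, allP_cons, allP2_cons,
  mapi_cons, cati_cons, cati_nil, mapi_nil).

Fixpoint Vrec (L : Type) (u : seq nat -> R) (t : tree R L) : R :=
  match t with
  | Leaf => u [::]
  | PNode J cs =>
      (fix go (i : nat) (cs : seq (tree R L)) : R :=
         match cs with
         | [::] => 0
         | c :: cs' => Num.max (Vrec (fun s => u (i :: s)) c) (go i.+1 cs')
         end) 0%N cs
  | CNode pcs =>
      (fix go (i : nat) (pcs : seq (R * tree R L)) : R :=
         match pcs with
         | [::] => 0
         | pc :: pcs' => pc.1 * Vrec (fun s => u (i :: s)) pc.2 + go i.+1 pcs'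
         end) 0%N pcs
  end.

Lemma EU_P L pi u J cs : @EU R L pi u (PNode J cs) =
  sumi (fun i c => pi J i * EU pi (fun s => u (i :: s)) c) 0 cs.
Proof. reflexivity. Qed.
Lemma EU_C L pi u pcs : @EU R L pi u (CNode pcs) =
  sumi (fun i pc => pc.1 * EU pi (fun s => u (i :: s)) pc.2) 0 pcs.
Proof. reflexivity. Qed.
Lemma V_P L u J cs : @Vrec L u (PNode J cs) =
  maxi (fun i c => Vrec (fun s => u (i :: s)) c) 0 cs.
Proof. reflexivity. Qed.
Lemma V_C L u pcs : @Vrec L u (CNode pcs) =
  sumi (fun i pc => pc.1 * Vrec (fun s => u (i :: s)) pc.2) 0 pcs.
Proof. reflexivity. Qed.
Lemma wf_P L nA J cs : @wf_game R L nA (PNode J cs) <->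
  (0 < nA J)%N /\ size cs = nA J /\ allP (wf_game nA) cs.
Proof. reflexivity. Qed.
Lemma wf_C L nA pcs : @wf_game R L nA (CNode pcs) <->
  pcs <> [::] /\ \sum_(pc <- pcs) pc.1 = 1 /\
  allP2 (fun pc => 0 <= pc.1) (fun pc => wf_game nA pc.2) pcs.
Proof. reflexivity. Qed.
Lemma pr1_P L o J cs : @pr1 R L o (PNode J cs) =
  PNode (J, o) (mapi (fun i c => pr1 (rcons o (J, i)) c) 0 cs).
Proof. reflexivity. Qed.
Lemma lo_P L J cs : @leaf_obs R L (PNode J cs) =
  cati (fun i c => map (cons (J, i)) (leaf_obs c)) 0 cs.
Proof. reflexivity. Qed.

Fixpoint tree_ind' (L : Type) (P : tree R L -> Prop) (HL : P Leaf)
  (HP : forall J cs, (forall c, List.In c cs -> P c) -> P (PNode J cs))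
  (HC : forall pcs, (forall pc, List.In pc pcs -> P pc.2) -> P (CNode pcs))
  (t : tree R L) {struct t} : P t :=
  match t with
  | Leaf => HL
  | PNode J cs => HP J cs
      ((fix go (cs : seq (tree R L)) : forall c, List.In c cs -> P c :=
          match cs with
          | [::] => fun c H => False_ind _ H
          | c0 :: cs' => fun c H =>
              match H with
              | or_introl e => eq_ind c0 P (tree_ind' HL HP HC c0) c e
              | or_intror H' => go cs' c H'
              end
          end) cs)
  | CNode pcs => HC pcs
      ((fix go (pcs : seq (R * tree R L)) : forall pc, List.In pc pcs -> P pc.2 :=
          match pcs with
          | [::] => fun c H => False_ind _ H
          | c0 :: cs' => fun c H =>
              match H with
              | or_introl e => eq_ind c0 (fun pc => P pc.2) (tree_ind' HL HP HC c0.2) c e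
              | or_intror H' => go cs' c H'
              end
          end) pcs)
  end.

Section Lists.
Variables (A : Type).
Implicit Types (l : seq A) (f g : nat -> A -> R).

Lemma sumi_ge0 f k l : (forall i x, List.In x l -> 0 <= f i x) -> 0 <= sumi f k l.
Proof.
elim: l k => [|x l IH] k H; rewrite ?lE //.
rewrite addr_ge0 //; first by apply: H; left.
by apply: IH => i y Hy; apply: H; right.
Qed.

Lemma sumi_le f g k l : (forall i x, List.In x l -> f i x <= g i x) ->
  sumi f k l <= sumi g k l.
Proof.
elim: l k => [|x l IH] k H; rewrite ?lE //.
rewrite lerD //; first by apply: H; left.
by apply: IH => i y Hy; apply: H; right.
Qed.

Lemma sumi_eq f g k l : (forall i x, List.In x l -> f i x = g i x) ->
  sumi f k l = sumi g k l.
Proof.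
elim: l k => [|x l IH] k H; rewrite ?lE //.
rewrite H; last by left.
by rewrite IH // => i y Hy; apply: H; right.
Qed.

Lemma maxi_eq f g k l : (forall i x, List.In x l -> f i x = g i x) ->
  maxi f k l = maxi g k l.
Proof.
elim: l k => [|x l IH] k H; rewrite ?lE //.
rewrite H; last by left.
by rewrite IH // => i y Hy; apply: H; right.
Qed.

Lemma sumi_ge_nth f k l d j : (forall i x, List.In x l -> 0 <= f i x) ->
  (j < size l)%N -> f (k + j)%N (nth d l j) <= sumi f k l.
Proof.
elim: l k j => [|x l IH] k j H Hj; first by [].
rewrite lE.
have H' : forall i y, List.In y l -> 0 <= f i y by move=> i y Hy; apply: H; right.
case: j Hj => [|j] Hj /=.
  by rewrite addn0 lerDl; apply: sumi_ge0.
rewrite addnS -addSn (le_trans (IH k.+1 j H' Hj)) // lerDr; by apply: H; left.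
Qed.

Lemma sumi_const_big (w : nat -> R) k l :
  sumi (fun i _ => w i) k l = \sum_(j < size l) w (k + j)%N.
Proof.
elim: l k => [|x l IH] k; rewrite ?lE; first by rewrite big_ord0.
by rewrite big_ord_recl IH addn0; congr (_ + _); apply: eq_bigr => j _;
  rewrite /bump /= addSn addnS.
Qed.

Lemma maxi_ge0 f k l : 0 <= maxi f k l.
Proof.
elim: l k => [|x l IH] k; rewrite ?lE //.
by rewrite le_max IH orbT.
Qed.

Lemma sumi_w_le (w : nat -> R) (E V : nat -> A -> R) k l :
  (forall i x, List.In x l -> 0 <= E i x <= V i x) -> (forall i, 0 <= w i) ->
  sumi (fun i x => w i * E i x) k l <= maxi V k l * sumi (fun i _ => w i) k l.
Proof.
elim: l k => [|x l IH] k H Hw; rewrite ?lE; first by rewrite mulr0.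
rewrite mulrDr; apply: lerD.
  rewrite [X in _ <= X]mulrC; apply: ler_wpM2l => //.
  have /andP[_ h] := H k x (or_introl erefl).
  by rewrite le_max h.
apply: (le_trans (IH _ _ Hw)).
  by move=> i y Hy; apply: H; right.
apply: ler_wpM2r.
  by apply: sumi_ge0 => i y _.
by rewrite le_max lexx orbT.
Qed.

Lemma maxi_attained f k l d : l <> [::] ->
  (forall i x, List.In x l -> 0 <= f i x) ->
  exists2 j, (j < size l)%N & maxi f k l = f (k + j)%N (nth d l j).
Proof.
elim: l k => [|x l IH] k // _ H; rewrite maxi_cons.
case: l IH H => [|y l] IH H.
  exists 0%N => //; rewrite maxi_nil addn0 /=.
  by apply/max_idPl; apply: H; left.
have H' : forall i z, List.In z (y :: l) -> 0 <= f i z.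
  by move=> i z Hz; apply: H; right.
have [j Hj Ej] := IH k.+1 (fun e => ltac:(discriminate)) H'.
set M := maxi f k.+1 (y :: l).
rewrite -/M in Ej.
case: (leP (f k x) M) => hle.
  exists j.+1 => //.
  by rewrite Ej addnS addSn.
by exists 0%N => //; rewrite addn0.

Qed.

Lemma In_nth l d j : (j < size l)%N -> List.In (nth d l j) l.
Proof.
elim: l j => [|x l IH] [|j] //= Hj; first by left.
by right; apply: IH.
Qed.

Lemma allP_In (P : A -> Prop) l : allP P l -> forall x, List.In x l -> P x.
Proof.
elim: l => [|y l IH]; rewrite ?lE // => -[Py Pl] x [<-|Hx] //.
exact: IH.
Qed.

Lemma allP2_In (P Q : A -> Prop) l : allP2 P Q l -> forall x, List.In x l -> P x /\ Q x.
Proof.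
elim: l => [|y l IH]; rewrite ?lE // => -[Py [Qy Pl]] x [<-|Hx] //.
exact: IH.
Qed.

Lemma sumi_map (B : Type) (f : nat -> B -> R) (h : A -> B) k l :
  sumi f k (map h l) = sumi (fun i x => f i (h x)) k l.
Proof. by elim: l k => [|x l IH] k //; rewrite map_cons !sumi_cons IH. Qed.

Lemma allP2_map (B : Type) (P Q : B -> Prop) (h : A -> B) l :
  allP2 P Q (map h l) <-> allP2 (fun x => P (h x)) (fun x => Q (h x)) l.
Proof.
elim: l => [|x l IH] //; rewrite map_cons !allP2_cons.
by split=> -[a [b c]]; split => //; split => //; apply/IH.
Qed.

Lemma In_flatten (B : eqType) (h : A -> seq B) l y :
  y \in flatten (map h l) -> exists x, List.In x l /\ y \in h x.
Proof.
elim: l => [|x l IH] //=; rewrite mem_cat => /orP[H|H].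
  by exists x; split => //; left.
by have [z [Hz Hy]] := IH H; exists z; split => //; right.
Qed.

Lemma nth_flatten (B : eqType) (h : A -> seq B) l d j y :
  (j < size l)%N -> y \in h (nth d l j) -> y \in flatten (map h l).
Proof.
elim: l j => [|x l IH] [|j] //= Hj Hy; rewrite mem_cat ?Hy //.
by rewrite (IH j) ?orbT.
Qed.

Lemma nth_cati (B : eqType) (h : nat -> A -> seq B) k l d j y :
  (j < size l)%N -> y \in h (k + j)%N (nth d l j) -> y \in cati h k l.
Proof.
elim: l k j => [|x l IH] k [|j] // Hj Hy; rewrite lE mem_cat.
  by rewrite addn0 in Hy; rewrite Hy.
by rewrite (IH k.+1 j) ?orbT // addSn -addnS.
Qed.

End Lists.

Lemma maxi_mapi (A B : Type) (f : nat -> B -> R) (g : nat -> A -> B) k l :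
  maxi f k (mapi g k l) = maxi (fun i x => f i (g i x)) k l.
Proof. by elim: l k => [|x l IH] k //; rewrite mapi_cons !maxi_cons IH. Qed.

Lemma size_mapi (A B : Type) (g : nat -> A -> B) k l : size (mapi g k l) = size l.
Proof. by elim: l k => [|x l IH] k //; rewrite mapi_cons /= IH. Qed.

Lemma In_mapi (A B : Type) (g : nat -> A -> B) k l y :
  List.In y (mapi g k l) -> exists i x, List.In x l /\ y = g i x.
Proof.
elim: l k => [|x l IH] k //; rewrite lE => -[<-|H]; first by exists k, x; split => //; left.
by have [i [z [Hz ->]]] := IH _ H; exists i, z; split => //; right.
Qed.

Lemma allP_intro (A : Type) (P : A -> Prop) l : (forall x, List.In x l -> P x) -> allP P l.
Proof.
elim: l => [|x l IH] // H; rewrite lE; split; first by apply: H; left.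
by apply: IH => y Hy; apply: H; right.
Qed.


Lemma In_flatten_intro (A : Type) (B : eqType) (h : A -> seq B) l x y :
  List.In x l -> y \in h x -> y \in flatten (map h l).
Proof.
elim: l => [|z l IH] //= [<-|Hx] Hy; rewrite mem_cat ?Hy //.
by rewrite IH ?orbT.
Qed.

Lemma allP2_intro (A : Type) (P Q : A -> Prop) l :
  (forall x, List.In x l -> P x /\ Q x) -> allP2 P Q l.
Proof.
elim: l => [|x l IH] // H; rewrite lE.
have [h1 h2] := H x (or_introl erefl).
split => //; split => //; apply: IH => y Hy; apply: H; by right.
Qed.

Lemma sum_ge0_In (A : Type) (F : A -> R) l :
  (forall x, List.In x l -> 0 <= F x) -> 0 <= \sum_(x <- l) F x.
Proof.
elim: l => [|x l IH] H; first by rewrite big_nil.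
rewrite big_cons addr_ge0 //; first by apply: H; left.
by apply: IH => y Hy; apply: H; right.
Qed.

Section Trees.
Variables (L : eqType) (nA : L -> nat).

Lemma wf_pos (t : tree R L) I : wf_game nA t -> I \in infosets t -> (0 < nA I)%N.
Proof.
elim/tree_ind': t => [|J cs IH|pcs IH].
- by [].
- move=> /wf_P [h0 [hs hall]] /=; rewrite in_cons => /orP[/eqP->//|].
  move=> /In_flatten [c [Hc HI]].
  exact: (IH c Hc (allP_In hall Hc) HI).
- move=> /wf_C [_ [_ hall]] /= /In_flatten [pc [Hpc HI]].
  exact: (IH pc Hpc (allP2_In hall Hpc).2 HI).
Qed.

Lemma Vrec_ge0 (t : tree R L) u : wf_game nA t -> (forall s, 0 <= u s) ->
  0 <= Vrec u t.
Proof.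
elim/tree_ind': t u => [|J cs IH|pcs IH] u.
- by move=> _ H; apply: H.
- by move=> _ _; rewrite V_P; apply: maxi_ge0.
- move=> /wf_C [_ [_ hall]] Hu; rewrite V_C; apply: sumi_ge0 => i pc Hpc.
  have [h1 h2] := allP2_In hall Hpc.
  by rewrite mulr_ge0 // IH.
Qed.

Lemma EU_ge0 (t : tree R L) pi u : wf_game nA t -> (forall I a, 0 <= pi I a) ->
  (forall s, 0 <= u s) -> 0 <= EU pi u t.
Proof.
elim/tree_ind': t u => [|J cs IH|pcs IH] u.
- by move=> _ _ H; apply: H.
- move=> /wf_P [_ [_ hall]] Hpi Hu; rewrite EU_P; apply: sumi_ge0 => i c Hc.
  by rewrite mulr_ge0 // IH //; exact: (allP_In hall Hc).
- move=> /wf_C [_ [_ hall]] Hpi Hu; rewrite EU_C; apply: sumi_ge0 => i pc Hpc.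
  have [h1 h2] := allP2_In hall Hpc.
  by rewrite mulr_ge0 // IH.
Qed.

Definition distr_on (t : tree R L) (pi : L -> nat -> R) :=
  forall I, I \in infosets t -> (forall a, 0 <= pi I a) /\ \sum_(a < nA I) pi I a = 1.

Lemma EU_le_V (t : tree R L) pi u : wf_game nA t -> distr_on t pi ->
  (forall s, 0 <= u s) -> 0 <= EU pi u t <= Vrec u t.
Proof.
elim/tree_ind': t u => [|J cs IH|pcs IH] u.
- by move=> _ _ H; rewrite lexx H.
- move=> /wf_P [_ [hs hall]] Hpi Hu; rewrite EU_P V_P.
  have [hp1 hp2] := Hpi J (mem_head _ _).
  have IHc : forall i c, List.In c cs ->
      0 <= EU pi (fun s => u (i :: s)) c <= Vrec (fun s => u (i :: s)) c.
    move=> i c Hc; apply: IH => //; first exact: (allP_In hall Hc).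
    move=> I HI; apply: Hpi => /=; rewrite in_cons (In_flatten_intro Hc HI).
    by rewrite orbT.
  apply/andP; split.
    apply: sumi_ge0 => i c Hc; rewrite mulr_ge0 //.
    by have /andP[] := IHc i c Hc.
  have HH := sumi_w_le 0 IHc hp1; apply: (le_trans HH).
  rewrite sumi_const_big hs.
  under eq_bigr do rewrite add0n.
  by rewrite hp2 mulr1.
- move=> /wf_C [_ [_ hall]] Hpi Hu; rewrite EU_C V_C.
  have IHc : forall i pc, List.In pc pcs ->
      0 <= pc.1 /\ 0 <= EU pi (fun s => u (i :: s)) pc.2 <= Vrec (fun s => u (i :: s)) pc.2.
    move=> i pc Hpc; have [h1 h2] := allP2_In hall Hpc; split => //.
    apply: IH => //.
    by move=> I HI; apply: Hpi => /=; rewrite (In_flatten_intro Hpc HI).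
  apply/andP; split.
    apply: sumi_ge0 => i pc Hpc; have [h1 /andP[h2 _]] := IHc i pc Hpc.
    by rewrite mulr_ge0.
  apply: sumi_le => i pc Hpc; have [h1 /andP[_ h2]] := IHc i pc Hpc.
  exact: ler_wpM2l.
Qed.

End Trees.

Section Pr1.
Variables (L : eqType) (nA : L -> nat).

Lemma pr1_C o pcs : @pr1 R L o (CNode pcs) = CNode (map (fun pc => (pc.1, pr1 o pc.2)) pcs).
Proof. by []. Qed.

Lemma pr1_ok (t : tree R L) o : wf_game nA t ->
  wf_game (fun k : L * seq (L * nat) => nA k.1) (pr1 o t) /\
  forall u, Vrec u (pr1 o t) = Vrec u t.
Proof.
elim/tree_ind': t o => [|J cs IH|pcs IH] o.
- by [].
- move=> /wf_P [h0 [hs hall]]; rewrite pr1_P; split.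
    apply/wf_P; split => //; split; first by rewrite size_mapi.
    apply: allP_intro => y Hy; have [i [c [Hc ->]]] := In_mapi Hy.
    exact: (IH c Hc _ (allP_In hall Hc)).1.
  move=> u; rewrite !V_P maxi_mapi; apply: maxi_eq => i c Hc.
  exact: (IH c Hc _ (allP_In hall Hc)).2.
- move=> /wf_C [h0 [hs hall]]; rewrite pr1_C; split.
    apply/wf_C; split; first by case: pcs h0 {IH hs hall}.
    split; first by rewrite big_map.
    apply/allP2_map; apply: allP2_intro => pc Hpc /=.
    have [h1 h2] := allP2_In hall Hpc; split => //.
    exact: (IH pc Hpc o h2).1.
  move=> u; rewrite !V_C sumi_map; apply: sumi_eq => i pc Hpc /=.
  have [h1 h2] := allP2_In hall Hpc.
  by rewrite (IH pc Hpc o h2).2.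
Qed.

End Pr1.


Lemma maxlist_ge (l : seq R) y : y \in l -> y <= maxlist l.
Proof.
case: l => [|x l] //=.
elim: l x y => [|z l IH] x y /=; first by rewrite inE => /eqP->.
rewrite !inE => /or3P[/eqP->|/eqP->|Hy].
- rewrite le_max; apply/orP; right.
  by apply: IH; rewrite inE eqxx.
- by rewrite le_max lexx.
- rewrite le_max; apply/orP; right; apply: IH; by rewrite inE Hy orbT.
Qed.

Lemma maxlist_in (l : seq R) : l != [::] -> maxlist l \in l.
Proof.
case: l => [|x l] //= _.
elim: l x => [|z l IH] x /=; first by rewrite inE.
have := IH x; rewrite !inE => /orP[/eqP E|H].
- rewrite E; case: (leP z x) => _; by rewrite eqxx ?orbT.
- case: (leP z (foldr Num.max x l)) => _; by rewrite ?eqxx ?H ?orbT.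
Qed.

Section Beta.
Variables (L : eqType) (nA : L -> nat).

Lemma maxbeta_ge (t : tree R L) y : y \in betas t -> y <= maxbeta t.
Proof. rewrite /maxbeta; case: (betas t) => // x l H; exact: maxlist_ge. Qed.

Lemma maxbeta_ge1 (t : tree R L) : (forall y, y \in betas t -> 1 <= y) -> 1 <= maxbeta t.
Proof.
rewrite /maxbeta; case E: (betas t) => [|x l] H //.
by apply: H; apply: maxlist_in.
Qed.

Lemma betas_ge1 (t : tree R L) : wf_game nA t ->
  forall y, y \in betas t -> 1 <= y.
Proof.
elim/tree_ind': t => [|J cs IH|pcs IH].
- by [].
- move=> /wf_P [_ [_ hall]] y /= /In_flatten [c [Hc Hy]].
  exact: (IH c Hc (allP_In hall Hc)).
- move=> /wf_C [h0 [_ hall]] y /=; rewrite inE => /orP[/eqP->|].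
    rewrite big_map.
    case: pcs h0 IH hall => [|pc pcs] // _ IH hall.
    have g1 : forall pc', List.In pc' (pc :: pcs) -> 1 <= maxbeta pc'.2.
      move=> pc' Hin; apply: maxbeta_ge1.
      exact: (IH pc' Hin (allP2_In hall Hin).2).
    rewrite big_cons -[X in X <= _](addr0 1); apply: lerD.
      exact: (g1 pc (or_introl erefl)).
    apply: sum_ge0_In => pc' Hpc'.
    apply: le_trans (g1 pc' (or_intror Hpc')) => //.
  move=> /In_flatten [pc [Hpc Hy]].
  exact: (IH pc Hpc (allP2_In hall Hpc).2).
Qed.

Lemma maxbeta_P (J : L) (cs : seq (tree R L)) c : wf_game nA (PNode J cs) -> List.In c cs ->
  maxbeta c <= maxbeta (PNode J cs).
Proof.
move=> wf Hc.
rewrite {1}/maxbeta; case E: (betas c) => [|x l].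
  exact: maxbeta_ge1 (betas_ge1 wf).
apply: maxbeta_ge => /=.
apply: (In_flatten_intro Hc); rewrite E; exact: (maxlist_in (l := x :: l)).
Qed.

Lemma maxbeta_C (pcs : seq (R * tree R L)) : maxbeta (CNode pcs) >= \sum_(pc <- pcs) maxbeta pc.2.
Proof.
apply: le_trans (maxbeta_ge (y := \sum_(pc <- pcs) maxbeta pc.2) _) => //.
by rewrite /= big_map inE eqxx.
Qed.

End Beta.


Inductive isleaf (L : Type) : tree R L -> seq nat -> seq (L * nat) -> R -> Prop :=
| il_leaf : isleaf Leaf [::] [::] 1
| il_p J cs i s o p : (i < size cs)%N -> isleaf (nth Leaf cs i) s o p ->
    isleaf (PNode J cs) (i :: s) ((J, i) :: o) p
| il_c pcs i s o p : (i < size pcs)%N -> isleaf (nth (0, Leaf) pcs i).2 s o p ->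
    isleaf (CNode pcs) (i :: s) o ((nth (0, Leaf) pcs i).1 * p).

Section Leaves.
Variables (L : eqType) (nA : L -> nat).

Lemma comb_C (pcs : seq (R * tree R L)) k (u : seq nat -> R) :
  pcs <> [::] ->
  (forall pc, List.In pc pcs -> 0 <= pc.1 /\ 0 <= maxbeta pc.2) ->
  (forall i pc, List.In pc pcs -> exists s o p, isleaf pc.2 s o p /\ 0 <= p /\
      Vrec (fun s => u (i :: s)) pc.2 <= maxbeta pc.2 * (p * u (i :: s))) ->
  exists j s o p, (j < size pcs)%N /\ isleaf (nth (0, Leaf) pcs j).2 s o p /\ 0 <= p /\
    sumi (fun i pc => pc.1 * Vrec (fun s => u (i :: s)) pc.2) k pcs <=
    (\sum_(pc <- pcs) maxbeta pc.2) * ((nth (0, Leaf) pcs j).1 * p * u ((k + j)%N :: s)).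
Proof.
elim: pcs k => [|pc pcs IH] k // _ Hpos Hleaf.
have [h1 h2] := Hpos pc (or_introl erefl).
have [s0 [o0 [p0 [Hl0 [Hp0 HV0]]]]] := Hleaf k pc (or_introl erefl).
have head : pc.1 * Vrec (fun s => u (k :: s)) pc.2 <= maxbeta pc.2 * (pc.1 * p0 * u (k :: s0)).
  rewrite -mulrA mulrCA; exact: ler_wpM2l.
rewrite sumi_cons big_cons.
case: pcs IH Hpos Hleaf => [|pc' pcs] IH Hpos Hleaf.
  exists 0%N, s0, o0, p0; split => //; split => //; split => //.
  by rewrite sumi_nil big_nil addr0 addr0 addn0.
have Hpos' : forall pc0, List.In pc0 (pc' :: pcs) -> 0 <= pc0.1 /\ 0 <= maxbeta pc0.2.
  by move=> pc0 H; apply: Hpos; right.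
have Hleaf' : forall i pc0, List.In pc0 (pc' :: pcs) -> exists s o p, isleaf pc0.2 s o p /\ 0 <= p /\
      Vrec (fun s => u (i :: s)) pc0.2 <= maxbeta pc0.2 * (p * u (i :: s)).
  by move=> i pc0 H; apply: Hleaf; right.
have [j [s [o [p [Hj [Hl [Hp HV]]]]]]] := IH k.+1 (fun e => ltac:(discriminate)) Hpos' Hleaf'.
set G := \sum_(pc <- pc' :: pcs) maxbeta pc.2.
have HG : 0 <= G.
  by apply: sum_ge0_In => pc0 H; have [] := Hpos' pc0 H.
set X0 := pc.1 * p0 * u (k :: s0).
set X1 := (nth (0, Leaf) (pc' :: pcs) j).1 * p * u ((k.+1 + j)%N :: s).
case: (leP X1 X0) => hX.
  exists 0%N, s0, o0, p0; split => //; split => //; split => //.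
  rewrite addn0 /= -/X0 mulrDl; apply: lerD => //.
  apply: le_trans HV _; exact: ler_wpM2l.
exists j.+1, s, o, p; split => //; split => //; split => //.
rewrite addnS -addSn /= -/X1 mulrDl; apply: lerD => //.
apply: le_trans head _; apply: ler_wpM2l => //; exact: ltW.
Qed.

Lemma leaf_select (t : tree R L) u : wf_game nA t -> (forall s, 0 <= u s) ->
  exists s o p, isleaf t s o p /\ 0 <= p /\ Vrec u t <= maxbeta t * (p * u s).
Proof.
elim/tree_ind': t u => [|J cs IH|pcs IH] u.
- move=> _ Hu; exists [::], [::], 1; split; first exact: il_leaf.
  by rewrite /maxbeta /= !mul1r ler01 lexx.
- move=> wf Hu; have [h0 [hs hall]] := wf.
  have cs0 : cs <> [::] by move=> E; rewrite E /= in hs; rewrite -hs in h0.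
  have [j Hj Ej] := maxi_attained 0 Leaf cs0
    (fun i c Hc => Vrec_ge0 (u := fun s => u (i :: s)) (allP_In hall Hc) (fun s => Hu _)).
  have Hc := In_nth Leaf Hj.
  have [s [o [p [Hl [Hp HV]]]]] := IH _ Hc (fun s => u (j :: s)) (allP_In hall Hc) (fun s => Hu _).
  exists (j :: s), ((J, j) :: o), p; split; first exact: il_p.
  split => //; rewrite V_P Ej add0n; apply: le_trans HV _.
  apply: ler_wpM2r; first by rewrite mulr_ge0.
  exact: maxbeta_P wf Hc.
- move=> /wf_C [h0 [hs hall]] Hu.
  have Hpos : forall pc, List.In pc pcs -> 0 <= pc.1 /\ 0 <= maxbeta pc.2.
    move=> pc Hpc; have [h1 h2] := allP2_In hall Hpc; split => //.
    apply: le_trans (maxbeta_ge1 (betas_ge1 h2)); exact: ler01.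
  have Hleaf : forall i pc, List.In pc pcs -> exists s o p, isleaf pc.2 s o p /\ 0 <= p /\
      Vrec (fun s => u (i :: s)) pc.2 <= maxbeta pc.2 * (p * u (i :: s)).
    move=> i pc Hpc; exact: (IH pc Hpc _ (allP2_In hall Hpc).2 (fun s => Hu _)).
  have [j [s [o [p [Hj [Hl [Hp HV]]]]]]] := comb_C 0 h0 Hpos Hleaf.
  have Hc := In_nth (0, Leaf) Hj.
  exists (j :: s), o, ((nth (0, Leaf) pcs j).1 * p); split; first exact: il_c.
  have [h1 _] := Hpos _ Hc.
  split; first by rewrite mulr_ge0.
  rewrite V_C; apply: le_trans HV _; rewrite add0n.
  apply: ler_wpM2r; first by rewrite !mulr_ge0.
  exact: maxbeta_C.
Qed.

Definition prodobs (pi : L -> nat -> R) (o : seq (L * nat)) := \prod_(x <- o) pi x.1 x.2.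

Lemma leaf_EU (t : tree R L) s o p pi u : isleaf t s o p -> wf_game nA t ->
  (forall I a, 0 <= pi I a) -> (forall s, 0 <= u s) ->
  prodobs pi o * p * u s <= EU pi u t.
Proof.
move=> H; elim: H u => {t s o p} [|J cs i s o p Hi Hl IH|pcs i s o p Hi Hl IH] u wf Hpi Hu.
- by rewrite /prodobs big_nil !mul1r.
- have [_ [_ hall]] := wf.
  rewrite EU_P.
  have Hnn : forall i' c, List.In c cs -> 0 <= pi J i' * EU pi (fun s => u (i' :: s)) c.
    move=> i' c Hc; rewrite mulr_ge0 //; apply: EU_ge0; [exact: (allP_In hall Hc) | done | move=> s'; exact: Hu].
  have := sumi_ge_nth 0 Leaf Hnn Hi.
  rewrite add0n; apply: le_trans.
  rewrite /prodobs big_cons -!mulrA; apply: ler_wpM2l => //; rewrite !mulrA.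
  exact: (IH (fun s => u (i :: s)) (allP_In hall (In_nth Leaf Hi)) Hpi (fun s => Hu _)).
- have /wf_C [_ [_ hall]] := wf.
  rewrite EU_C.
  have Hnn : forall i' pc, List.In pc pcs -> 0 <= pc.1 * EU pi (fun s => u (i' :: s)) pc.2.
    move=> i' pc Hpc; have [h1 h2] := allP2_In hall Hpc.
    rewrite mulr_ge0 //; apply: (EU_ge0 (nA := nA)) => // s'; exact: Hu.
  have := sumi_ge_nth 0 (0, Leaf) Hnn Hi.
  rewrite add0n; apply: le_trans.
  have [h1 h2] := allP2_In hall (In_nth (0, Leaf) Hi).
  rewrite mulrCA -!mulrA; apply: ler_wpM2l => //; rewrite !mulrA.
  exact: (IH (fun s => u (i :: s)) h2 Hpi (fun s => Hu _)).
Qed.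

Lemma leaf_obs_in (t : tree R L) s o p : isleaf t s o p -> o \in leaf_obs t.
Proof.
elim => {t s o p} [|J cs i s o p Hi Hl IH|pcs i s o p Hi Hl IH].
- by rewrite inE.
- rewrite lo_P; apply: (nth_cati (d := Leaf) (j := i)) => //.
  by rewrite add0n; apply: map_f.
- exact: (nth_flatten (h := fun pc => leaf_obs pc.2) (d := (0, Leaf)) Hi).
Qed.

Lemma leaf_obs_ok (t : tree R L) s o p : isleaf t s o p -> wf_game nA t ->
  forall x, x \in o -> x.1 \in infosets t /\ (x.2 < nA x.1)%N.
Proof.
elim => {t s o p} [|J cs i s o p Hi Hl IH|pcs i s o p Hi Hl IH] wf x //.
- have [h0 [hs hall]] := wf.
  rewrite inE => /orP[/eqP->|Hx] /=.
    by rewrite inE eqxx -hs.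
  have [H1 H2] := IH (allP_In hall (In_nth Leaf Hi)) x Hx; split => //.
  rewrite inE; apply/orP; right; exact: (nth_flatten Hi H1).
- have /wf_C [_ [_ hall]] := wf => Hx.
  have [H1 H2] := IH (allP2_In hall (In_nth (0, Leaf) Hi)).2 x Hx; split => //.
  exact: (nth_flatten (h := fun pc => infosets pc.2) Hi H1).
Qed.

End Leaves.


Section Strat.
Variables (L : eqType) (nA : L -> nat).

Definition nI (o : seq (L * nat)) (I : L) := count (pred1 I) (map fst o).

Definition piO (o : seq (L * nat)) (I : L) (a : nat) : R :=
  if nI o I == 0%N then (nA I)%:R^-1
  else (count (pred1 (I, a)) o)%:R / (nI o I)%:R.

Lemma piO_ge0 o I a : 0 <= piO o I a.
Proof. rewrite /piO; case: ifP => _; by rewrite ?invr_ge0 ?divr_ge0 ?ler0n. Qed.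

Lemma sum_count (o : seq (L * nat)) I n :
  (forall x, x \in o -> x.1 = I -> (x.2 < n)%N) ->
  (\sum_(a < n) count (pred1 (I, (a : nat))) o)%N = nI o I.
Proof.
rewrite /nI; elim: o => [|x o IH] H /=.
  by rewrite big1.
rewrite big_split /= IH; last by move=> y Hy; apply: H; rewrite inE Hy orbT.
congr (_ + _)%N.
case: x H => [I' b] H /=.
case: (eqVneq I' I) => [EI|NI].
  subst I'.
  have Hb : (b < n)%N by apply: (H (I, b)); rewrite ?mem_head.
  rewrite (bigD1 (Ordinal Hb)) //= eqxx /= big1 ?addn0 // => a Ha.
  rewrite xpair_eqE eqxx /=.
  case: eqP => // Eb; move: Ha; rewrite -val_eqE /= Eb eqxx //.
rewrite big1 //= => a _; rewrite xpair_eqE (negbTE NI) //.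
Qed.

Lemma piO_sum o I : (0 < nA I)%N ->
  (forall x, x \in o -> (x.2 < nA x.1)%N) ->
  \sum_(a < nA I) piO o I a = 1.
Proof.
move=> hn Ho; rewrite /piO; case: eqP => Hn.
  by rewrite sumr_const card_ord -[X in X = _]mulr_natr mulVf // pnatr_eq0 -lt0n.
rewrite -mulr_suml -natr_sum sum_count.
  by rewrite mulfV // pnatr_eq0; apply/eqP.
by move=> x Hx <-; apply: Ho.
Qed.

Lemma nI_gt0 o x : x \in o -> (0 < nI o x.1)%N.
Proof. by move=> Hx; rewrite /nI count_map -has_count; apply/hasP; exists x => //=; rewrite /= eqxx. Qed.

Lemma prodobs_gt0 o : 0 < prodobs (piO o) o.
Proof.
rewrite /prodobs big_seq_cond prodr_gt0 // => x /andP[Hx _].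
rewrite /piO; have -> : (nI o x.1 == 0%N) = false by apply/negbTE; rewrite -lt0n nI_gt0.
rewrite divr_gt0 // ltr0n ?nI_gt0 // -surjective_pairing -has_count.
by apply/hasP; exists x => //=; rewrite eqxx.
Qed.

Lemma alphaE (o : seq (L * nat)) : @alpha R L o = \prod_(I <- undup (map fst o) | (1 < nI o I)%N)
  \prod_(a <- undup [seq x.2 | x <- o & x.1 == I])
    ((count (pred1 (I, a)) o)%:R / (nI o I)%:R) ^+ count (pred1 (I, a)) o.
Proof. by []. Qed.

Lemma prodobs_alpha (o : seq (L * nat)) : prodobs (piO o) o = @alpha R L o.
Proof.
set f := fun x : L * nat => (count (pred1 x) o)%:R / (nI o x.1)%:R : R.
have E1 : prodobs (piO o) o = \prod_(x <- o) f x.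
  apply: eq_big_seq => x Hx; rewrite /piO.
  have -> : (nI o x.1 == 0%N) = false by apply/negbTE; rewrite -lt0n nI_gt0.
  by rewrite /f -surjective_pairing.
rewrite E1 alphaE.
set U := undup (map fst o).
have E2 : \prod_(x <- o) f x = \prod_(x <- o) \prod_(I <- U | I == x.1) f x.
  apply: eq_big_seq => x Hx.
  rewrite -big_filter.
  have -> : [seq I <- U | I == x.1] = [:: x.1].
    apply: (filter_pred1_uniq (undup_uniq _)).
    by rewrite mem_undup map_f.
  by rewrite big_seq1.
rewrite E2; under eq_bigr do rewrite big_mkcond.
rewrite exchange_big /= [RHS]big_mkcond /=.
apply: eq_big_seq => I HI; rewrite -big_mkcond /=.
have HI' : I \in map fst o by rewrite -mem_undup.
case: ifP => hn.
- rewrite -big_filter.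
  transitivity (\prod_(x <- [seq x <- o | x.1 == I])
                  ((count (pred1 (I, x.2)) o)%:R / (nI o I)%:R : R)).
    have -> : [seq x <- o | I == x.1] = [seq x <- o | x.1 == I].
      by apply: eq_filter => x; rewrite eq_sym.
    apply: eq_big_seq => x; rewrite mem_filter => /andP[/eqP <- _].
    by case: x.
  rewrite -(big_map (fun x => x.2) xpredT (fun a => (count (pred1 (I, a)) o)%:R / (nI o I)%:R)).
  rewrite -big_undup_iterop_count.
  apply: eq_big_seq => a _.
  rewrite Monoid.iteropE iter_mulr_1.
  congr (_ ^+ _).
  rewrite count_map count_filter; apply: eq_count => -[I' b] /=.
  by rewrite xpair_eqE andbC.
- apply: big1_seq => x /andP[/eqP EI Hx].
  have h1 : (0 < count (pred1 x) o)%N by rewrite -has_count; apply/hasP; exists x => //=; rewrite eqxx.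
  have h2 : (count (pred1 x) o <= nI o I)%N.
    rewrite /nI count_map; apply: sub_count => y /=.
    by move=> /eqP ->; rewrite EI.
  have h3 : (0 < nI o I)%N by rewrite EI nI_gt0.
  have h4 : nI o I = 1%N by apply/eqP; rewrite eqn_leq h3 leqNgt hn.
  rewrite /f -EI h4.
  have -> : count (pred1 x) o = 1%N by apply/eqP; rewrite eqn_leq h1 -h4 h2.
  by rewrite divr1.
Qed.

End Strat.

End S.

Unset Implicit Arguments.

Theorem theorem2 (R : realType) (L : eqType) (nA : L -> nat) (t : tree R L)
    (wf : wf_game nA t)
    (u : seq nat -> R) (hu : forall s, 0 <= u s)
    (hpos : 0 < optval nA t u) :
  optval (fun k : L * seq (L * nat) => nA k.1) (pr1 [::] t) u / optval nA t u
    <= vor_bound t.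
Proof.
set W := optval nA t u.
set V := optval _ _ u.
have [wf1 Vpr] := pr1_ok (nA := nA) [::] wf.
have HV : V <= Vrec u t.
  rewrite /V /optval; apply: ge_sup.
    exists (EU (fun (I : L * seq (L * nat)) (a : nat) => (nA I.1)%:R^-1) u (pr1 [::] t)).
    exists (fun (I : L * seq (L * nat)) (a : nat) => (nA I.1)%:R^-1) => //.
    move=> I HI; split; first by move=> a; rewrite invr_ge0 ler0n.
    rewrite sumr_const card_ord -[X in X = _]mulr_natr mulVf // pnatr_eq0 -lt0n.
    exact: (wf_pos wf1 HI).
  move=> x [pi Hpi <-]; rewrite -(Vpr u).
  by have /andP[] := EU_le_V wf1 Hpi hu.
have [s [o [p [Hl [Hp HVr]]]]] := leaf_select (u := u) wf hu.
set pi := @piO R L nA o.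
have Hpi : is_strat nA t pi.
  move=> I HI; split; first by move=> a; apply: piO_ge0.
  apply: piO_sum; first exact: (wf_pos wf HI).
  by move=> x Hx; have [] := leaf_obs_ok Hl wf Hx.
have HW : @alpha R _ o * p * u s <= W.
  rewrite -(@prodobs_alpha R L nA o) -/pi.
  apply: le_trans (leaf_EU Hl wf (@piO_ge0 R L nA o) hu) _.
  rewrite /W /optval; apply: ub_le_sup.
    exists (Vrec u t) => x [pi' Hpi' <-].
    by have /andP[] := EU_le_V wf Hpi' hu.
  by exists pi.
have Ha : 0 < @alpha R _ o by rewrite -(@prodobs_alpha R L nA o) prodobs_gt0.
have Hmb : 0 <= maxbeta t.
  apply: le_trans (maxbeta_ge1 (betas_ge1 wf)); exact: ler01.
apply: (@le_trans _ _ (maxbeta t * (@alpha R _ o)^-1)).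
  rewrite ler_pdivrMr //.
  apply: le_trans HV _; apply: le_trans HVr _.
  rewrite -mulrA; apply: ler_wpM2l => //.
  rewrite [X in _ <= X]mulrC ler_pdivlMr // mulrC !mulrA; exact: HW.
rewrite /vor_bound; apply: ler_wpM2l => //.
apply: maxlist_ge; apply: map_f; exact: leaf_obs_in Hl.
Qed.
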